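(* Let $\beta<0$, $a,\gamma\in\mathbb{R}$, and let $\Omega\subset\mathbb{R}$ be a compact interval containing $0$ in its interior. Consider the control system on $\mathbb{R}^2$ $$\dot s=\beta(s-\omega),\qquad \dot t=(a\omega+\gamma)s,\qquad \omega\in\Omega .$$ Then: (1) If $\gamma\neq0$, the set $\Omega\times\mathbb{R}$ is the only control set of the system. (2) If $\gamma=0$ and $a\neq 0$, then for every $t\in\mathbb{R}$ the singleton $\{(0,t)\}$ is a control set of the system (and these are distinct control sets).
   Context: Controls are piecewise constant functions $\omega:\mathbb{R}\to\Omega$; $\varphi(\tau,\mathbf v,\omega)$ is the solution at time $\tau$ from $\mathbf v$, and $\mathcal O^+(\mathbf v)$ is the set of points reachable from $\mathbf v$ in nonnegative time. A control set is a nonempty set $\mathcal C\subset\mathbb{R}^2$, maximal with respect to inclusion, such that (i) for every $x\in\mathcal C$ there is a control $\omega$ with $\varphi(\tau,x,\omega)\in\mathcal C$ for all $\tau\ge0$, and (ii) $\mathcal C\subset\overline{\mathcal O^+(x)}$ for all $x\in\mathcal C$. *)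

(* Defs.v *)
From Stdlib Require Import Reals.
From Coquelicot Require Import Coquelicot.
Open Scope R_scope.

Definition Omega (lo hi : R) (u : R) : Prop := lo <= u <= hi.

Definition piecewise_constant (w : R -> R) : Prop :=
  forall a b : R, a < b ->
    exists (n : nat) (p : nat -> R),
      p 0%nat = a /\ p n = b /\
      (forall i : nat, (i < n)%nat -> p i < p (S i)) /\
      (forall i : nat, (i < n)%nat ->
         exists c : R, forall r : R, p i < r < p (S i) -> w r = c).

Definition admissible (lo hi : R) (w : R -> R) : Prop :=
  piecewise_constant w /\ forall r : R, Omega lo hi (w r).

Definition rhs_s (beta : R) (x : R * R) (u : R) : R := beta * (fst x - u).
Definition rhs_t (a gamma : R) (x : R * R) (u : R) : R := (a * u + gamma) * fst x.

Definition is_solution (beta a gamma : R) (v : R * R) (w : R -> R)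
  (x : R -> R * R) : Prop :=
  forall tau : R,
    ex_RInt (fun r => rhs_s beta (x r) (w r)) 0 tau /\
    ex_RInt (fun r => rhs_t a gamma (x r) (w r)) 0 tau /\
    fst (x tau) = fst v + RInt (fun r => rhs_s beta (x r) (w r)) 0 tau /\
    snd (x tau) = snd v + RInt (fun r => rhs_t a gamma (x r) (w r)) 0 tau.

Definition reach_plus (beta a gamma lo hi : R) (v : R * R) (y : R * R) : Prop :=
  exists w x tau, admissible lo hi w /\ is_solution beta a gamma v w x /\
    0 <= tau /\ x tau = y.

Definition closure2 (A : R * R -> Prop) (y : R * R) : Prop :=
  forall eps : R, 0 < eps ->
    exists z, A z /\ Rabs (fst z - fst y) < eps /\ Rabs (snd z - snd y) < eps.

Definition cs_props (beta a gamma lo hi : R) (C : R * R -> Prop) : Prop :=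
  (exists v, C v) /\
  (forall v, C v -> exists w x, admissible lo hi w /\
       is_solution beta a gamma v w x /\ forall tau, 0 <= tau -> C (x tau)) /\
  (forall v, C v -> forall y, C y -> closure2 (reach_plus beta a gamma lo hi v) y).

Definition control_set (beta a gamma lo hi : R) (C : R * R -> Prop) : Prop :=
  cs_props beta a gamma lo hi C /\
  forall D : R * R -> Prop, cs_props beta a gamma lo hi D ->
    (forall v, C v -> D v) -> forall v, D v -> C v.

(* Main.v *)
Require Import Defs.
From Stdlib Require Import Reals Lra Lia.
From Coquelicot Require Import Coquelicot.
Open Scope R_scope.

Lemma cont_int (f : R -> R) (c : R) :
  (forall z, ex_RInt f 0 z) -> forall r, continuous (fun z => c + RInt f 0 z) r.
Proof.
  intros H r.
  apply (continuous_plus (fun _ => c) (RInt f 0)).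
  apply continuous_const.
  apply (continuous_RInt_1 f 0 r).
  apply filter_forall. intros z. exact (RInt_correct f 0 z (H z)).
Qed.

Lemma sol_cont_s beta a gamma v w x :
  is_solution beta a gamma v w x -> forall r, continuous (fun z => fst (x z)) r.
Proof.
  intros H r.
  apply continuous_ext with (f := fun z => fst v + RInt (fun r => rhs_s beta (x r) (w r)) 0 z).
  intros z. symmetry. apply H.
  apply cont_int. intros z; apply H.
Qed.

Lemma sol_cont_t beta a gamma v w x :
  is_solution beta a gamma v w x -> forall r, continuous (fun z => snd (x z)) r.
Proof.
  intros H r.
  apply continuous_ext with (f := fun z => snd v + RInt (fun r => rhs_t a gamma (x r) (w r)) 0 z).
  intros z. symmetry. apply H.
  apply cont_int. intros z; apply H.
Qed.

Lemma deriv_int (f g : R -> R) (c r : R) :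
  (forall z, ex_RInt f 0 z) -> locally r (fun z => f z = g z) -> continuous g r ->
  is_derive (fun z => c + RInt f 0 z) r (f r).
Proof.
  intros H Hl Hg.
  replace (f r) with (plus zero (f r)) by (apply plus_zero_l).
  apply (is_derive_plus (fun _ => c) (RInt f 0)).
  exact (is_derive_const (K:=R_AbsRing) (V:=R_NormedModule) c r).
  apply is_derive_RInt with (a := 0).
  apply filter_forall. intros z. exact (RInt_correct f 0 z (H z)).
  apply continuous_ext_loc with (f := f) (g := g). 2: exact Hg. revert Hl; apply filter_imp; intros; auto.
Qed.

Lemma piece_loc (w : R -> R) c a0 b0 r :
  (forall r', a0 < r' < b0 -> w r' = c) -> a0 < r < b0 ->
  locally r (fun z => w z = c).
Proof.
  intros H Hr.
  apply (locally_interval _ r a0 b0); simpl; try lra.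
  intros y H1 H2; apply H; lra.
Qed.

Lemma sol_der_s beta a gamma v w x c a0 b0 r :
  is_solution beta a gamma v w x -> (forall r', a0 < r' < b0 -> w r' = c) -> a0 < r < b0 ->
  is_derive (fun z => fst (x z)) r (beta * (fst (x r) - c)).
Proof.
  intros H Hw Hr.
  apply is_derive_ext with (f := fun z => fst v + RInt (fun r => rhs_s beta (x r) (w r)) 0 z).
  intros z. symmetry. apply H.
  replace (beta * (fst (x r) - c)) with (rhs_s beta (x r) (w r)) by (unfold rhs_s; rewrite (Hw r Hr); auto).
  apply (deriv_int (fun r => rhs_s beta (x r) (w r)) (fun z => beta * (fst (x z) - c))).
  intros z; apply H.
  generalize (piece_loc w c a0 b0 r Hw Hr). apply filter_imp. intros z Hz. unfold rhs_s. rewrite Hz. auto.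
  apply (continuous_scal_r beta (fun z => fst (x z) - c)).
  apply (continuous_plus (fun z => fst (x z)) (fun _ => - c)).
  apply (sol_cont_s _ _ _ _ _ _ H). apply continuous_const.
Qed.

Lemma sol_der_t beta a gamma v w x c a0 b0 r :
  is_solution beta a gamma v w x -> (forall r', a0 < r' < b0 -> w r' = c) -> a0 < r < b0 ->
  is_derive (fun z => snd (x z)) r ((a * c + gamma) * fst (x r)).
Proof.
  intros H Hw Hr.
  apply is_derive_ext with (f := fun z => snd v + RInt (fun r => rhs_t a gamma (x r) (w r)) 0 z).
  intros z. symmetry. apply H.
  replace ((a * c + gamma) * fst (x r)) with (rhs_t a gamma (x r) (w r)) by (unfold rhs_t; rewrite (Hw r Hr); auto).
  apply (deriv_int (fun r => rhs_t a gamma (x r) (w r)) (fun z => (a * c + gamma) * fst (x z))).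
  intros z; apply H.
  generalize (piece_loc w c a0 b0 r Hw Hr). apply filter_imp. intros z Hz. unfold rhs_t. rewrite Hz. auto.
  apply (continuous_scal_r (a * c + gamma) (fun z => fst (x z))).
  apply (sol_cont_s _ _ _ _ _ _ H).
Qed.

Lemma piece_mono (F df : R -> R) a0 b0 :
  a0 < b0 -> (forall r, continuous F r) ->
  (forall r, a0 < r < b0 -> is_derive F r (df r)) ->
  (forall r, a0 <= r <= b0 -> 0 <= df r) -> F a0 <= F b0.
Proof.
  intros Hab Hc Hd Hp.
  destruct (MVT_gen F a0 b0 df) as [c [Hc1 Hc2]].
  - rewrite Rmin_left, Rmax_right by lra. exact Hd.
  - intros r _. apply continuity_pt_filterlim. apply Hc.
  - rewrite Rmin_left, Rmax_right in Hc1 by lra.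
    assert (0 <= df c) by (apply Hp; lra). nra.
Qed.

Lemma piece_smono (F df : R -> R) a0 b0 :
  a0 < b0 -> (forall r, continuous F r) ->
  (forall r, a0 < r < b0 -> is_derive F r (df r)) ->
  (forall r, a0 <= r <= b0 -> 0 < df r) -> F a0 < F b0.
Proof.
  intros Hab Hc Hd Hp.
  destruct (MVT_gen F a0 b0 df) as [c [Hc1 Hc2]].
  - rewrite Rmin_left, Rmax_right by lra. exact Hd.
  - intros r _. apply continuity_pt_filterlim. apply Hc.
  - rewrite Rmin_left, Rmax_right in Hc1 by lra.
    assert (0 < df c) by (apply Hp; lra). nra.
Qed.

Lemma chain_mono (w F : R -> R) :
  piecewise_constant w ->
  (forall a0 b0 c, a0 < b0 -> (forall r, a0 < r < b0 -> w r = c) -> F a0 <= F b0) ->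
  forall a0 b0, a0 <= b0 -> F a0 <= F b0.
Proof.
  intros Hw H a0 b0 Hab.
  destruct (Req_dec a0 b0) as [->|Hne]; [lra|].
  destruct (Hw a0 b0 ltac:(lra)) as [n [p [H0 [Hn [Hinc Hcst]]]]].
  assert (forall i, (i <= n)%nat -> F a0 <= F (p i)).
  { induction i as [|i IH]; intros Hi.
    - rewrite H0; lra.
    - destruct (Hcst i ltac:(lia)) as [c Hc].
      eapply Rle_trans. apply IH; lia.
      apply (H _ _ c). apply Hinc; lia. exact Hc. }
  rewrite <- Hn. apply H1. lia.
Qed.

Lemma der_lin (f : R -> R) k1 k2 r df : is_derive f r df -> is_derive (fun z => k1 + k2 * f z) r (k2 * df).
Proof.
  intros H.
  replace (k2 * df) with (plus zero (k2 * df)) by (apply plus_zero_l).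
  apply (is_derive_plus (fun _ => k1) (fun z => k2 * f z)).
  exact (is_derive_const (K:=R_AbsRing) (V:=R_NormedModule) k1 r).
  apply is_derive_scal. exact H.
Qed.

Lemma der_add (f g : R -> R) r df dg : is_derive f r df -> is_derive g r dg -> is_derive (fun z => f z + g z) r (df + dg).
Proof. intros; apply (is_derive_plus f g); auto. Qed.

Lemma der_mul (f g : R -> R) r df dg : is_derive f r df -> is_derive g r dg -> is_derive (fun z => f z * g z) r (df * g r + f r * dg).
Proof. intros; apply (is_derive_mult f g); auto. intros; apply Rmult_comm. Qed.

Lemma der_exp k r : is_derive (fun z => exp (k * z)) r (k * exp (k * r)).
Proof. auto_derive; auto. ring. Qed.

Lemma cont_mul_exp (f : R -> R) k r : continuous f r -> continuous (fun z => f z * exp (k * z)) r.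
Proof.
  intros H. apply (continuous_mult f (fun z => exp (k * z))). exact H.
  assert (Hx : ex_derive (fun z => exp (k * z)) r) by (exists (k * exp (k * r)); apply der_exp).
  exact (ex_derive_continuous (K:=R_AbsRing) (V:=R_NormedModule) _ _ Hx).
Qed.

Lemma cont_lin (f : R -> R) k1 k2 r : continuous f r -> continuous (fun z => k1 + k2 * f z) r.
Proof.
  intros H. apply (continuous_plus (fun _ => k1) (fun z => k2 * f z)). apply continuous_const.
  apply (continuous_scal_r k2 f). exact H.
Qed.

Lemma sol_at0 beta a gamma v w x : is_solution beta a gamma v w x -> x 0 = v.
Proof.
  intros H. destruct (H 0) as [_ [_ [H1 H2]]].
  rewrite !RInt_point in H1, H2. unfold zero in H1, H2; simpl in H1, H2.
  destruct (x 0), v; simpl in *. f_equal; lra.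
Qed.

Lemma piece_val lo hi (w : R -> R) a0 b0 c :
  (forall r, Omega lo hi (w r)) -> a0 < b0 -> (forall r, a0 < r < b0 -> w r = c) -> lo <= c <= hi.
Proof.
  intros Ho Hab Hc. rewrite <- (Hc ((a0 + b0) / 2)) by lra. apply Ho.
Qed.

Lemma exp_inv_mul k t : exp (k * t) * exp (- k * t) = 1.
Proof. rewrite <- exp_plus. replace (k * t + - k * t) with 0 by ring. apply exp_0. Qed.

Lemma barrier_hi beta a gamma lo hi v w x : beta < 0 -> admissible lo hi w ->
  is_solution beta a gamma v w x -> forall tau, 0 <= tau ->
  fst (x tau) <= hi + (fst v - hi) * exp (beta * tau).
Proof.
  intros Hb [Hpc Ho] Hs tau Ht.
  pose (F := fun z => (hi + (-1) * fst (x z)) * exp ((- beta) * z)).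
  assert (HF : F 0 <= F tau).
  { apply (chain_mono w F Hpc); [|lra].
    intros a0 b0 c Hab Hc.
    destruct (piece_val lo hi w a0 b0 c Ho Hab Hc) as [Hc1 Hc2].
    apply (piece_mono F (fun r => (- beta) * exp ((- beta) * r) * (hi - c)) a0 b0 Hab).
    - intros r. apply cont_mul_exp. apply cont_lin. apply (sol_cont_s _ _ _ _ _ _ Hs).
    - intros r Hr. unfold F.
      assert (E := der_mul _ _ r _ _ (der_lin _ hi (-1) r _ (sol_der_s _ _ _ _ _ _ _ _ _ r Hs Hc Hr)) (der_exp (- beta) r)).
      match type of E with is_derive _ _ ?l => replace ((- beta) * exp ((- beta) * r) * (hi - c)) with l by ring end.
      exact E.
    - intros r _. assert (0 < exp ((- beta) * r)) by apply exp_pos. apply Rmult_le_pos; [apply Rmult_le_pos|]; lra. }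
  unfold F in HF. rewrite (sol_at0 _ _ _ _ _ _ Hs) in HF.
  replace (- beta * 0) with 0 in HF by ring. rewrite exp_0 in HF.
  assert (Hp : 0 < exp (beta * tau)) by apply exp_pos.
  assert (E := exp_inv_mul beta tau).
  apply Rmult_le_compat_l with (r := exp (beta * tau)) in HF; [|lra].
  replace (exp (beta * tau) * ((hi + -1 * fst (x tau)) * exp (- beta * tau))) with (hi + -1 * fst (x tau)) in HF.
  nra. transitivity ((hi + -1 * fst (x tau)) * (exp (beta * tau) * exp (- beta * tau))). rewrite E; ring. ring.
Qed.

Lemma barrier_lo beta a gamma lo hi v w x : beta < 0 -> admissible lo hi w ->
  is_solution beta a gamma v w x -> forall tau, 0 <= tau ->
  lo + (fst v - lo) * exp (beta * tau) <= fst (x tau).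
Proof.
  intros Hb [Hpc Ho] Hs tau Ht.
  pose (F := fun z => (- lo + 1 * fst (x z)) * exp ((- beta) * z)).
  assert (HF : F 0 <= F tau).
  { apply (chain_mono w F Hpc); [|lra].
    intros a0 b0 c Hab Hc.
    destruct (piece_val lo hi w a0 b0 c Ho Hab Hc) as [Hc1 Hc2].
    apply (piece_mono F (fun r => (- beta) * exp ((- beta) * r) * (c - lo)) a0 b0 Hab).
    - intros r. apply cont_mul_exp. apply cont_lin. apply (sol_cont_s _ _ _ _ _ _ Hs).
    - intros r Hr. unfold F.
      assert (E := der_mul _ _ r _ _ (der_lin _ (- lo) 1 r _ (sol_der_s _ _ _ _ _ _ _ _ _ r Hs Hc Hr)) (der_exp (- beta) r)).
      match type of E with is_derive _ _ ?l => replace ((- beta) * exp ((- beta) * r) * (c - lo)) with l by ring end.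
      exact E.
    - intros r _. assert (0 < exp ((- beta) * r)) by apply exp_pos. apply Rmult_le_pos; [apply Rmult_le_pos|]; lra. }
  unfold F in HF. rewrite (sol_at0 _ _ _ _ _ _ Hs) in HF.
  replace (- beta * 0) with 0 in HF by ring. rewrite exp_0 in HF.
  assert (Hp : 0 < exp (beta * tau)) by apply exp_pos.
  assert (E := exp_inv_mul beta tau).
  apply Rmult_le_compat_l with (r := exp (beta * tau)) in HF; [|lra].
  replace (exp (beta * tau) * ((- lo + 1 * fst (x tau)) * exp (- beta * tau))) with (- lo + 1 * fst (x tau)) in HF.
  nra. transitivity ((- lo + 1 * fst (x tau)) * (exp (beta * tau) * exp (- beta * tau))). rewrite E; ring. ring.
Qed.

Definition lyapF beta a (x : R -> R * R) z :=
  a * snd (x z) + (a * a / (2 * beta)) * (fst (x z) * fst (x z)).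

Lemma lyap_cont beta a gamma v w x : is_solution beta a gamma v w x -> forall r, continuous (lyapF beta a x) r.
Proof.
  intros Hs r. unfold lyapF.
  apply (continuous_plus (fun z => a * snd (x z)) (fun z => (a * a / (2 * beta)) * (fst (x z) * fst (x z)))).
  apply (continuous_scal_r a (fun z => snd (x z))). apply (sol_cont_t _ _ _ _ _ _ Hs).
  apply (continuous_scal_r (a * a / (2 * beta)) (fun z => fst (x z) * fst (x z))).
  apply (continuous_mult (fun z => fst (x z)) (fun z => fst (x z))); apply (sol_cont_s _ _ _ _ _ _ Hs).
Qed.

Lemma lyap_der beta a v w x c a0 b0 r : beta < 0 ->
  is_solution beta a 0 v w x -> (forall r', a0 < r' < b0 -> w r' = c) -> a0 < r < b0 ->
  is_derive (lyapF beta a x) r (a * a * (fst (x r) * fst (x r))).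
Proof.
  intros Hb Hs Hc Hr. unfold lyapF.
  assert (E := der_add _ _ r _ _
     (der_lin _ 0 a r _ (sol_der_t _ _ _ _ _ _ _ _ _ r Hs Hc Hr))
     (der_lin _ 0 (a * a / (2 * beta)) r _ (der_mul _ _ r _ _ (sol_der_s _ _ _ _ _ _ _ _ _ r Hs Hc Hr) (sol_der_s _ _ _ _ _ _ _ _ _ r Hs Hc Hr)))).
  match type of E with is_derive _ _ ?l => replace (a * a * (fst (x r) * fst (x r))) with l by (field; lra) end.
  eapply is_derive_ext; [|exact E]. intros t; simpl. ring.
Qed.

Lemma lyap_mono beta a lo hi v w x : beta < 0 -> admissible lo hi w ->
  is_solution beta a 0 v w x -> forall t1 t2, t1 <= t2 -> lyapF beta a x t1 <= lyapF beta a x t2.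
Proof.
  intros Hb [Hpc Ho] Hs.
  apply (chain_mono w _ Hpc).
  intros a0 b0 c Hab Hc.
  apply (piece_mono _ (fun r => a * a * (fst (x r) * fst (x r))) a0 b0 Hab).
  - apply (lyap_cont _ _ _ _ _ _ Hs).
  - intros r Hr. apply (lyap_der _ _ _ _ _ _ _ _ _ Hb Hs Hc Hr).
  - intros r _. apply Rmult_le_pos. nra. nra.
Qed.

Lemma lyap_strict beta a lo hi v w x : beta < 0 -> a <> 0 -> admissible lo hi w ->
  is_solution beta a 0 v w x -> fst v <> 0 ->
  exists tau, 0 < tau /\ lyapF beta a x 0 < lyapF beta a x tau.
Proof.
  intros Hb Ha [Hpc Ho] Hs Hv.
  assert (Hc0 := sol_cont_s _ _ _ _ _ _ Hs 0).
  assert (Hx0 := sol_at0 _ _ _ _ _ _ Hs).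
  assert (Hpos : 0 < Rabs (fst v)) by (apply Rabs_pos_lt; auto).
  destruct (proj1 (filterlim_locally _ _) Hc0 (mkposreal _ Hpos)) as [d Hd].
  destruct (Hpc 0 (d / 2)) as [n [p [H0 [Hn [Hinc Hcst]]]]].
  { destruct d; simpl; lra. }
  assert (Hn0 : (0 < n)%nat). { destruct n. rewrite Hn in H0. destruct d; simpl in *; lra. lia. }
  destruct (Hcst 0%nat Hn0) as [c Hc].
  assert (Hp1 : p 1%nat <= d / 2).
  { rewrite <- Hn. clear -Hinc Hn0.
    assert (forall k, (1 <= k <= n)%nat -> p 1%nat <= p k).
    { induction k; intros Hk. lia. destruct (Nat.eq_dec k 0). subst; lra.
      eapply Rle_trans. apply IHk; lia. left; apply Hinc; lia. }
    apply H; lia. }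
  assert (Hp0 : 0 < p 1%nat) by (rewrite <- H0; apply Hinc; auto).
  exists (p 1%nat). split; auto.
  rewrite <- H0 at 1.
  apply (piece_smono _ (fun r => a * a * (fst (x r) * fst (x r))) (p 0%nat) (p 1%nat)).
  - apply Hinc; auto.
  - apply (lyap_cont _ _ _ _ _ _ Hs).
  - intros r Hr. apply (lyap_der _ _ _ _ _ _ _ _ _ Hb Hs Hc Hr).
  - intros r Hr. rewrite H0 in Hr.
    assert (Hb' : ball 0 d r).
    { unfold ball; simpl; unfold AbsRing_ball; simpl. unfold abs, minus, plus, opp; simpl.
      destruct d; simpl in *. rewrite Rabs_right; lra. }
    specialize (Hd r Hb'). unfold ball in Hd; simpl in Hd; unfold AbsRing_ball in Hd; simpl in Hd.
    unfold abs, minus, plus, opp in Hd; simpl in Hd. rewrite Hx0 in Hd.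
    assert (fst (x r) <> 0).
    { intros E. rewrite E in Hd. replace (0 + - fst v) with (- fst v) in Hd by ring.
      rewrite Rabs_Ropp in Hd. lra. }
    assert (0 < a * a) by (destruct (Rlt_or_le a 0); nra).
    assert (0 < fst (x r) * fst (x r)) by nra. nra.
Qed.

Lemma rint_helper (f df : R -> R) tau : (forall r, is_derive f r (df r)) -> (forall r, ex_derive df r) ->
  ex_RInt df 0 tau /\ RInt df 0 tau = f tau - f 0.
Proof.
  intros H1 H2.
  assert (Hi : is_RInt df 0 tau (minus (f tau) (f 0))).
  { apply (is_RInt_derive (V:=R_CompleteNormedModule)). intros; apply H1. intros r _.
    exact (ex_derive_continuous (K:=R_AbsRing) (V:=R_NormedModule) _ _ (H2 r)). }
  split. exists (minus (f tau) (f 0)); exact Hi.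
  rewrite (is_RInt_unique _ _ _ _ Hi). reflexivity.
Qed.

Definition csol beta a gamma d p t0 : R -> R * R := fun r =>
  (d + (p - d) * exp (beta * r), t0 + (a * d + gamma) * (d * r + (p - d) * (exp (beta * r) - 1) / beta)).

Lemma csol_sol beta a gamma d p t0 : beta <> 0 ->
  is_solution beta a gamma (p, t0) (fun _ => d) (csol beta a gamma d p t0).
Proof.
  intros Hb tau. unfold rhs_s, rhs_t, csol; simpl.
  destruct (rint_helper (fun r => (p - d) * exp (beta * r)) (fun r => beta * (d + (p - d) * exp (beta * r) - d)) tau) as [A1 A2].
  { intros r. auto_derive; auto. ring. }
  { intros r. auto_derive; auto. }
  destruct (rint_helper (fun r => (a * d + gamma) * (d * r + (p - d) * (exp (beta * r) - 1) / beta))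
     (fun r => (a * d + gamma) * (d + (p - d) * exp (beta * r))) tau) as [B1 B2].
  { intros r. auto_derive; auto. field. auto. }
  { intros r. auto_derive; auto. }
  split; [exact A1|]. split; [exact B1|]. split.
  rewrite A2. replace (beta * 0) with 0 by ring. rewrite exp_0. ring.
  rewrite B2. replace (beta * 0) with 0 by ring. rewrite exp_0. field. auto.
Qed.

Lemma const_adm lo hi d : lo <= d <= hi -> admissible lo hi (fun _ => d).
Proof.
  intros Hd. split.
  - intros a0 b0 Hab. exists 1%nat, (fun i => if Nat.eqb i 0 then a0 else b0).
    simpl. split; auto. split; auto. split.
    + intros i Hi. assert (i = 0%nat) by lia. subst; simpl; auto.
    + intros i Hi. exists d. auto.
  - intros r. exact Hd.
Qed.

Lemma reach_const beta a gamma lo hi d p t0 tau : beta <> 0 -> lo <= d <= hi -> 0 <= tau ->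
  reach_plus beta a gamma lo hi (p, t0) (csol beta a gamma d p t0 tau).
Proof.
  intros Hb Hd Ht. exists (fun _ => d), (csol beta a gamma d p t0), tau.
  split. apply const_adm; auto. split. apply csol_sol; auto. split; auto.
Qed.

Lemma glue_int1 (F F1 : R -> R) t1 tau : 0 <= t1 -> tau <= t1 ->
  (forall r, r < t1 -> F r = F1 r) -> ex_RInt F1 0 tau ->
  ex_RInt F 0 tau /\ RInt F 0 tau = RInt F1 0 tau.
Proof.
  intros H0 H1 HF Hex.
  assert (Hext : forall r, Rmin 0 tau < r < Rmax 0 tau -> F1 r = F r).
  { intros r Hr. symmetry. apply HF. assert (Rmax 0 tau <= t1) by (apply Rmax_lub; lra). lra. }
  split. apply (ex_RInt_ext F1); auto.
  symmetry. apply RInt_ext. auto.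
Qed.

Lemma glue_int2 (F F1 F2 : R -> R) t1 tau : 0 <= t1 < tau ->
  (forall r, r < t1 -> F r = F1 r) -> (forall r, t1 < r -> F r = F2 (r - t1)) ->
  ex_RInt F1 0 t1 -> ex_RInt F2 0 (tau - t1) ->
  ex_RInt F 0 tau /\ RInt F 0 tau = RInt F1 0 t1 + RInt F2 0 (tau - t1).
Proof.
  intros Ht HF1 HF2 E1 E2.
  destruct (glue_int1 F F1 t1 t1) as [G1 G2]; auto; try lra.
  assert (I2 : is_RInt F t1 tau (RInt F2 0 (tau - t1))).
  { assert (I : is_RInt F2 (1 * t1 + - t1) (1 * tau + - t1) (RInt F2 0 (tau - t1))).
    { replace (1 * t1 + - t1) with 0 by ring. replace (1 * tau + - t1) with (tau - t1) by ring.
      exact (RInt_correct (V:=R_CompleteNormedModule) _ _ _ E2). }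
    apply (is_RInt_comp_lin (V:=R_NormedModule)) in I.
    apply (is_RInt_ext (V:=R_NormedModule)) with (f := fun y => scal 1 (F2 (1 * y + - t1))); auto.
    intros r Hr. rewrite Rmin_left, Rmax_right in Hr by lra. rewrite HF2 by lra.
    change (1 * F2 (1 * r + - t1) = F2 (r - t1)). rewrite Rmult_1_l. f_equal. ring. }
  assert (X2 : ex_RInt F t1 tau) by (eexists; exact I2).
  split. apply (ex_RInt_Chasles F 0 t1 tau); auto.
  rewrite <- (RInt_Chasles (V:=R_CompleteNormedModule) F 0 t1 tau); auto.
  rewrite G2. rewrite (is_RInt_unique _ _ _ _ I2). reflexivity.
Qed.

Lemma part_mono (p : nat -> R) n : (forall i, (i < n)%nat -> p i < p (S i)) ->
  forall i j, (i <= j <= n)%nat -> p i <= p j.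
Proof.
  intros H i j Hij. induction j as [|j IH].
  - assert (i = 0%nat) by lia. subst; lra.
  - destruct (Nat.eq_dec i (S j)). subst; lra.
    eapply Rle_trans. apply IH; lia. left; apply H; lia.
Qed.

Definition glue_w (w1 w2 : R -> R) t1 := fun r => if Rlt_dec r t1 then w1 r else w2 (r - t1).

Lemma pc_glue w1 w2 t1 : piecewise_constant w1 -> piecewise_constant w2 ->
  piecewise_constant (glue_w w1 w2 t1).
Proof.
  intros P1 P2 a0 b0 Hab. unfold glue_w.
  destruct (Rle_dec b0 t1) as [Hb|Hb].
  { destruct (P1 a0 b0 Hab) as [n [p [H0 [Hn [Hinc Hc]]]]].
    exists n, p. split; auto. split; auto. split; auto.
    intros i Hi. destruct (Hc i Hi) as [c Hc']. exists c. intros r Hr.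
    assert (p (S i) <= p n) by (apply (part_mono p n Hinc); lia).
    destruct (Rlt_dec r t1). auto. lra. }
  destruct (Rle_dec t1 a0) as [Ha|Ha].
  { destruct (P2 (a0 - t1) (b0 - t1) ltac:(lra)) as [n [p [H0 [Hn [Hinc Hc]]]]].
    exists n, (fun i => p i + t1). simpl. split. rewrite H0; ring. split. rewrite Hn; ring. split.
    intros i Hi. specialize (Hinc i Hi). lra.
    intros i Hi. destruct (Hc i Hi) as [c Hc']. exists c. intros r Hr.
    assert (p 0%nat <= p i) by (apply (part_mono p n Hinc); lia).
    destruct (Rlt_dec r t1). lra. apply Hc'. lra. }
  destruct (P1 a0 t1 ltac:(lra)) as [n1 [p1 [H10 [H1n [H1inc H1c]]]]].
  destruct (P2 0 (b0 - t1) ltac:(lra)) as [n2 [p2 [H20 [H2n [H2inc H2c]]]]].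
  assert (Hn2 : (1 <= n2)%nat). { destruct n2. rewrite H20 in H2n. lra. lia. }
  assert (Hn1 : (1 <= n1)%nat). { destruct n1. rewrite H10 in H1n. lra. lia. }
  exists (n1 + n2)%nat, (fun i => if Nat.leb i n1 then p1 i else p2 (i - n1)%nat + t1).
  split. simpl. auto.
  split. destruct (Nat.leb_spec (n1 + n2) n1). lia. replace (n1 + n2 - n1)%nat with n2 by lia. rewrite H2n; ring.
  split.
  - intros i Hi. destruct (Nat.leb_spec i n1); destruct (Nat.leb_spec (S i) n1).
    + apply H1inc; lia.
    + assert (i = n1) by lia. subst i. rewrite H1n. replace (S n1 - n1)%nat with 1%nat by lia.
      assert (p2 0%nat < p2 1%nat) by (apply H2inc; lia). lra.
    + lia.
    + replace (S i - n1)%nat with (S (i - n1)) by lia. assert (p2 (i - n1)%nat < p2 (S (i - n1))) by (apply H2inc; lia). lra.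
  - intros i Hi. destruct (Nat.leb_spec (S i) n1).
    + destruct (H1c i ltac:(lia)) as [c Hc]. exists c. intros r Hr.
      destruct (Nat.leb_spec i n1); [|lia].
      assert (p1 (S i) <= p1 n1) by (apply (part_mono p1 n1 H1inc); lia).
      destruct (Rlt_dec r t1). apply Hc; lra. lra.
    + destruct (H2c (i - n1)%nat ltac:(lia)) as [c Hc]. exists c. intros r Hr.
      destruct (Nat.leb_spec (S i) n1); [lia|].
      assert (Hlow : t1 <= (if Nat.leb i n1 then p1 i else p2 (i - n1)%nat + t1)).
      { destruct (Nat.leb_spec i n1).
        - assert (i = n1) by lia. subst i. lra.
        - assert (p2 0%nat <= p2 (i - n1)%nat) by (apply (part_mono p2 n2 H2inc); lia). lra. }
      destruct (Rlt_dec r t1). lra.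
      apply Hc. destruct (Nat.leb_spec i n1).
      * assert (i = n1) by lia. subst i. replace (n1 - n1)%nat with 0%nat by lia.
        replace (S n1 - n1)%nat with 1%nat in Hr by lia. lra.
      * replace (S i - n1)%nat with (S (i - n1)) in Hr by lia. lra.
Qed.

Lemma reach_trans beta a gamma lo hi v y z :
  reach_plus beta a gamma lo hi v y -> reach_plus beta a gamma lo hi y z ->
  reach_plus beta a gamma lo hi v z.
Proof.
  intros [w1 [x1 [t1 [[P1 O1] [S1 [T1 E1]]]]]] [w2 [x2 [t2 [[P2 O2] [S2 [T2 E2]]]]]].
  exists (glue_w w1 w2 t1), (fun r => if Rle_dec r t1 then x1 r else x2 (r - t1)), (t1 + t2).
  split; [split|].
  { apply pc_glue; auto. }
  { intros r. unfold glue_w. destruct (Rlt_dec r t1); auto. }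
  split; [|split; [lra|]].
  2:{ destruct (Rle_dec (t1 + t2) t1).
      - assert (t2 = 0) by lra. subst t2. rewrite <- E2, (sol_at0 _ _ _ _ _ _ S2). replace (t1 + 0) with t1 by ring. auto.
      - replace (t1 + t2 - t1) with t2 by ring. auto. }
  assert (Ew1 : forall r, r < t1 -> glue_w w1 w2 t1 r = w1 r).
  { intros r Hr. unfold glue_w. destruct (Rlt_dec r t1); [auto|lra]. }
  assert (Ew2 : forall r, t1 < r -> glue_w w1 w2 t1 r = w2 (r - t1)).
  { intros r Hr. unfold glue_w. destruct (Rlt_dec r t1); [lra|auto]. }
  assert (Ex1 : forall r, r < t1 -> (if Rle_dec r t1 then x1 r else x2 (r - t1)) = x1 r).
  { intros r Hr. destruct (Rle_dec r t1); [auto|lra]. }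
  assert (Ex2 : forall r, t1 < r -> (if Rle_dec r t1 then x1 r else x2 (r - t1)) = x2 (r - t1)).
  { intros r Hr. destruct (Rle_dec r t1); [lra|auto]. }
  intros tau.
  destruct (Rle_dec tau t1) as [Ht|Ht].
  - destruct (S1 tau) as [A1 [A2 [A3 A4]]].
    destruct (glue_int1 (fun r => rhs_s beta (if Rle_dec r t1 then x1 r else x2 (r - t1)) (glue_w w1 w2 t1 r))
      (fun r => rhs_s beta (x1 r) (w1 r)) t1 tau) as [B1 B2]; auto.
    { intros r Hr. rewrite Ex1, Ew1; auto. }
    destruct (glue_int1 (fun r => rhs_t a gamma (if Rle_dec r t1 then x1 r else x2 (r - t1)) (glue_w w1 w2 t1 r))
      (fun r => rhs_t a gamma (x1 r) (w1 r)) t1 tau) as [C1 C2]; auto.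
    { intros r Hr. rewrite Ex1, Ew1; auto. }
    split; auto. split; auto. rewrite B2, C2. destruct (Rle_dec tau t1); [|lra]. auto.
  - destruct (S1 t1) as [A1 [A2 [A3 A4]]].
    destruct (S2 (tau - t1)) as [D1 [D2 [D3 D4]]].
    destruct (glue_int2 (fun r => rhs_s beta (if Rle_dec r t1 then x1 r else x2 (r - t1)) (glue_w w1 w2 t1 r))
      (fun r => rhs_s beta (x1 r) (w1 r)) (fun r => rhs_s beta (x2 r) (w2 r)) t1 tau) as [B1 B2]; auto; try lra.
    { intros r Hr. rewrite Ex1, Ew1; auto. }
    { intros r Hr. rewrite Ex2, Ew2; auto. }
    destruct (glue_int2 (fun r => rhs_t a gamma (if Rle_dec r t1 then x1 r else x2 (r - t1)) (glue_w w1 w2 t1 r))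
      (fun r => rhs_t a gamma (x1 r) (w1 r)) (fun r => rhs_t a gamma (x2 r) (w2 r)) t1 tau) as [C1 C2]; auto; try lra.
    { intros r Hr. rewrite Ex1, Ew1; auto. }
    { intros r Hr. rewrite Ex2, Ew2; auto. }
    split; auto. split; auto. rewrite B2, C2. destruct (Rle_dec tau t1); [lra|].
    rewrite D3, D4. rewrite <- E1, A3, A4. split; ring.
Qed.

Lemma reach_eq beta a gamma lo hi v y y' : y = y' -> reach_plus beta a gamma lo hi v y -> reach_plus beta a gamma lo hi v y'.
Proof. intros ->; auto. Qed.

Lemma reach_hold beta a gamma lo hi d t0 T : beta < 0 -> lo <= d <= hi -> 0 <= T ->
  reach_plus beta a gamma lo hi (d, t0) (d, t0 + (a * d + gamma) * d * T).
Proof.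
  intros Hb Hd HT. eapply reach_eq; [|apply (reach_const _ _ _ _ _ d d t0 T); auto; lra].
  unfold csol. f_equal; field; lra.
Qed.

Lemma reach_refl beta a gamma lo hi v : beta < 0 -> lo < 0 < hi -> reach_plus beta a gamma lo hi v v.
Proof.
  intros Hb Hl. destruct v as [p t0].
  eapply reach_eq; [|apply (reach_const _ _ _ _ _ 0 p t0 0); auto; lra].
  unfold csol. replace (beta * 0) with 0 by ring. rewrite exp_0. f_equal; field; lra.
Qed.

Lemma transfer_gen beta a gamma lo hi d p q : beta < 0 -> lo <= d <= hi -> d <> p ->
  0 < (q - d) / (p - d) <= 1 ->
  exists K, forall t0, reach_plus beta a gamma lo hi (p, t0) (q, t0 + K).
Proof.
  intros Hb Hd Hdp [Hr1 Hr2].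
  pose (tau := ln ((q - d) / (p - d)) / beta).
  assert (Ee : exp (beta * tau) = (q - d) / (p - d)).
  { unfold tau. replace (beta * (ln ((q - d) / (p - d)) / beta)) with (ln ((q - d) / (p - d))) by (field; lra).
    apply exp_ln; auto. }
  assert (Ht : 0 <= tau).
  { unfold tau. assert (ln ((q - d) / (p - d)) <= 0).
    { rewrite <- ln_1. destruct Hr2 as [Hr2|Hr2]. left; apply ln_increasing; auto. rewrite Hr2; lra. }
    unfold Rdiv. assert (/ beta < 0) by (apply Rinv_lt_0_compat; auto). nra. }
  exists ((a * d + gamma) * (d * tau + (p - d) * (exp (beta * tau) - 1) / beta)).
  intros t0. eapply reach_eq; [|apply (reach_const _ _ _ _ _ d p t0 tau); auto; lra].
  unfold csol. rewrite Ee. f_equal. field. intros E; apply Hdp; lra.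
Qed.

Lemma ratio01 x y : 0 < x <= y -> 0 < x / y <= 1.
Proof.
  intros H. split. apply Rdiv_lt_0_compat; lra. unfold Rdiv.
  apply (Rmult_le_reg_r y); [lra|]. rewrite Rmult_assoc, Rinv_l by lra. lra.
Qed.

Lemma transfer beta a gamma lo hi p q : beta < 0 -> lo <= p <= hi -> lo < q < hi ->
  exists K, forall t0, reach_plus beta a gamma lo hi (p, t0) (q, t0 + K).
Proof.
  intros Hb Hp Hq. destruct (Rle_dec p q).
  - apply (transfer_gen _ _ _ _ _ hi); auto; try lra.
    replace ((q - hi) / (p - hi)) with ((hi - q) / (hi - p)) by (field; lra).
    apply ratio01; lra.
  - apply (transfer_gen _ _ _ _ _ lo); auto; try lra.
    apply ratio01; lra.
Qed.

Lemma exact_reach beta a gamma lo hi s1 t1 s2 t2 : beta < 0 -> lo < 0 < hi -> gamma <> 0 ->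
  lo <= s1 <= hi -> lo < s2 < hi -> reach_plus beta a gamma lo hi (s1, t1) (s2, t2).
Proof.
  intros Hb Hl Hg Hs1 Hs2.
  pose (m := Rmin 1 (Rmin hi (- lo))).
  assert (Hm : 0 < m /\ m <= 1 /\ m <= hi /\ m <= - lo).
  { unfold m. repeat split.
    - apply Rmin_glb_lt; [lra|]. apply Rmin_glb_lt; lra.
    - apply Rmin_l.
    - eapply Rle_trans; [apply Rmin_r|apply Rmin_l].
    - eapply Rle_trans; [apply Rmin_r|apply Rmin_r]. }
  pose (N := 2 * (1 + Rabs a + Rabs gamma)).
  assert (HA := Rabs_pos a). assert (HG := Rabs_pos gamma).
  assert (HN : 0 < N) by (unfold N; lra).
  pose (d0 := m / N).
  assert (Hd0N : d0 * N = m) by (unfold d0; field; lra).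
  assert (Hd0 : 0 < d0) by (unfold d0; apply Rdiv_lt_0_compat; lra).
  assert (Had : Rabs a * d0 <= 1 / 2).
  { assert (Rabs a * d0 * N <= N / 2).
    { replace (Rabs a * d0 * N) with (Rabs a * m) by (rewrite <- Hd0N; ring). unfold N. nra. }
    nra. }
  assert (Hgd : Rabs gamma * d0 < m).
  { assert (Rabs gamma * d0 * N < m * N).
    { replace (Rabs gamma * d0 * N) with (Rabs gamma * m) by (rewrite <- Hd0N; ring). unfold N. nra. }
    nra. }
  assert (Ha1 := Rle_abs a). assert (Ha2 := Rle_abs (- a)). rewrite Rabs_Ropp in Ha2.
  assert (Hg1 := Rle_abs gamma). assert (Hg2 := Rle_abs (- gamma)). rewrite Rabs_Ropp in Hg2.
  pose (cp := gamma * d0). pose (cm := - gamma * d0).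
  assert (Hcp : lo < cp < hi) by (unfold cp; split; nra).
  assert (Hcm : lo < cm < hi) by (unfold cm; split; nra).
  assert (Hgg : 0 < gamma * gamma) by (destruct (Rlt_or_le gamma 0); [nra|]; destruct H; [nra|congruence]).
  pose (vp := (a * cp + gamma) * cp). pose (vm := (a * cm + gamma) * cm).
  assert (Hvp : 0 < vp).
  { replace vp with (gamma * gamma * d0 * (1 + a * d0)) by (unfold vp, cp; ring).
    apply Rmult_lt_0_compat. apply Rmult_lt_0_compat; auto. nra. }
  assert (Hvm : vm < 0).
  { replace vm with (- (gamma * gamma * d0 * (1 - a * d0))) by (unfold vm, cm; ring).
    apply Ropp_lt_gt_0_contravar. apply Rmult_lt_0_compat. apply Rmult_lt_0_compat; auto. nra. }
  destruct (transfer beta a gamma lo hi s1 cp) as [K1 HK1]; auto.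
  destruct (transfer beta a gamma lo hi cp cm) as [K2 HK2]; auto; try lra.
  destruct (transfer beta a gamma lo hi cm s2) as [K3 HK3]; auto; try lra.
  pose (D := t2 - t1 - K1 - K2 - K3).
  destruct (Rle_dec 0 D) as [HD|HD].
  - pose (Tp := D / vp). pose (Tm := 0).
    eapply reach_trans. apply HK1.
    eapply reach_trans. apply (reach_hold _ _ _ _ _ cp (t1 + K1) Tp); auto; try lra.
    { unfold Tp. apply Rmult_le_pos; auto. left; apply Rinv_0_lt_compat; auto. }
    eapply reach_trans. apply HK2.
    eapply reach_trans. apply (reach_hold _ _ _ _ _ cm _ Tm); auto; try lra. unfold Tm; lra.
    eapply reach_eq; [|apply HK3]. f_equal.
    unfold Tm, Tp, D. fold vp. fold vm. field. lra.
  - pose (Tm := D / vm). pose (Tp := 0).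
    eapply reach_trans. apply HK1.
    eapply reach_trans. apply (reach_hold _ _ _ _ _ cp (t1 + K1) Tp); auto; try lra. unfold Tp; lra.
    eapply reach_trans. apply HK2.
    eapply reach_trans. apply (reach_hold _ _ _ _ _ cm _ Tm); auto; try lra.
    { unfold Tm. unfold Rdiv. assert (/ vm < 0) by (apply Rinv_lt_0_compat; auto). nra. }
    eapply reach_eq; [|apply HK3]. f_equal.
    unfold Tm, Tp, D. fold vp. fold vm. field. lra.
Qed.

Lemma exp_le1 x : x <= 0 -> exp x <= 1.
Proof. intros [H|H]. rewrite <- exp_0. left; apply exp_increasing; auto. rewrite H, exp_0; lra. Qed.

Lemma reach_bounds beta a gamma lo hi u z : beta < 0 -> reach_plus beta a gamma lo hi u z ->
  Rmin lo (fst u) <= fst z <= Rmax hi (fst u).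
Proof.
  intros Hb [w [x [tau [Ha [Hs [Ht <-]]]]]].
  assert (H1 := barrier_hi _ _ _ _ _ _ _ _ Hb Ha Hs tau Ht).
  assert (H2 := barrier_lo _ _ _ _ _ _ _ _ Hb Ha Hs tau Ht).
  assert (He1 : exp (beta * tau) <= 1) by (apply exp_le1; nra).
  assert (He0 := exp_pos (beta * tau)).
  split.
  - unfold Rmin. destruct (Rle_dec lo (fst u)); nra.
  - unfold Rmax. destruct (Rle_dec hi (fst u)); nra.
Qed.

Lemma closure_fst_le (A : R * R -> Prop) y K : closure2 A y -> (forall z, A z -> fst z <= K) -> fst y <= K.
Proof.
  intros Hc H. destruct (Rle_dec (fst y) K) as [|Hn]; auto.
  destruct (Hc (fst y - K)) as [z [Az [H1 _]]]. lra.
  specialize (H z Az). apply Rabs_def2 in H1. lra.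
Qed.

Lemma closure_fst_ge (A : R * R -> Prop) y K : closure2 A y -> (forall z, A z -> K <= fst z) -> K <= fst y.
Proof.
  intros Hc H. destruct (Rle_dec K (fst y)) as [|Hn]; auto.
  destruct (Hc (K - fst y)) as [z [Az [H1 _]]]. lra.
  specialize (H z Az). apply Rabs_def2 in H1. lra.
Qed.

Definition Lf beta a (p : R * R) := a * snd p + (a * a / (2 * beta)) * (fst p * fst p).

Definition Qf c k (p : R * R) := c * snd p + k * (fst p * fst p).

Lemma closure_Q_ge c k (A : R * R -> Prop) y K : closure2 A y -> (forall z, A z -> K <= Qf c k z) -> K <= Qf c k y.
Proof.
  intros Hc H. destruct (Rle_dec K (Qf c k y)) as [|Hn]; auto.
  pose (a := c). pose (B := Rabs a + Rabs k * (2 * Rabs (fst y) + 1)).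
  assert (HB : 0 <= B) by (unfold B; assert (0 <= Rabs a) by apply Rabs_pos; assert (0 <= Rabs k) by apply Rabs_pos; assert (0 <= Rabs (fst y)) by apply Rabs_pos; nra).
  pose (del := K - Qf c k y).
  pose (e := Rmin 1 (del / (B + 1))).
  assert (Hdel : 0 < del) by (unfold del; lra).
  assert (He : 0 < e) by (unfold e; apply Rmin_glb_lt; [lra|apply Rdiv_lt_0_compat; lra]).
  assert (He1 : e <= 1) by apply Rmin_l.
  assert (He2 : e * (B + 1) <= del).
  { assert (e <= del / (B + 1)) by apply Rmin_r.
    apply Rmult_le_compat_r with (r := B + 1) in H0; [|lra].
    replace (del / (B + 1) * (B + 1)) with del in H0 by (field; lra). lra. }
  destruct (Hc e He) as [z [Az [H1 H2]]].
  specialize (H z Az).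
  assert (Hd : Rabs (Qf c k z - Qf c k y) <= e * B).
  { unfold Qf. fold a.
    replace (a * snd z + k * (fst z * fst z) - (a * snd y + k * (fst y * fst y)))
      with (a * (snd z - snd y) + k * ((fst z - fst y) * (fst z + fst y))) by ring.
    eapply Rle_trans. apply Rabs_triang. rewrite !Rabs_mult.
    assert (Hs : Rabs (fst z + fst y) <= 2 * Rabs (fst y) + 1).
    { replace (fst z + fst y) with ((fst z - fst y) + 2 * fst y) by ring.
      eapply Rle_trans. apply Rabs_triang. rewrite Rabs_mult, (Rabs_right 2) by lra. lra. }
    unfold B.
    assert (0 <= Rabs a) by apply Rabs_pos. assert (0 <= Rabs k) by apply Rabs_pos.
    assert (0 <= Rabs (fst z - fst y)) by apply Rabs_pos. assert (0 <= Rabs (fst z + fst y)) by apply Rabs_pos.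
    assert (Rabs a * Rabs (snd z - snd y) <= Rabs a * e) by (apply Rmult_le_compat_l; lra).
    assert (Rabs (fst z - fst y) * Rabs (fst z + fst y) <= e * (2 * Rabs (fst y) + 1)) by (apply Rmult_le_compat; lra).
    assert (Rabs k * (Rabs (fst z - fst y) * Rabs (fst z + fst y)) <= Rabs k * (e * (2 * Rabs (fst y) + 1))) by (apply Rmult_le_compat_l; lra).
    nra. }
  assert (Hd2 := Rle_abs (Qf c k z - Qf c k y)). assert (e * (B + 1) = e * B + e) by ring. unfold del in He2. lra.
Qed.

Lemma closure_L_ge beta a (A : R * R -> Prop) y K : closure2 A y -> (forall z, A z -> K <= Lf beta a z) -> K <= Lf beta a y.
Proof. intros Hc H. apply (closure_Q_ge a (a * a / (2 * beta)) A y K Hc H). Qed.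

Lemma closure_L_le beta a (A : R * R -> Prop) y K : closure2 A y -> (forall z, A z -> Lf beta a z <= K) -> Lf beta a y <= K.
Proof.
  intros Hc H. assert (- K <= Qf (- a) (- (a * a / (2 * beta))) y).
  { apply (closure_Q_ge _ _ A y (- K) Hc). intros z Az. specialize (H z Az). unfold Qf, Lf in *. lra. }
  unfold Qf, Lf in *. lra.
Qed.


Lemma reach_L beta a lo hi u z : beta < 0 -> reach_plus beta a 0 lo hi u z -> Lf beta a u <= Lf beta a z.
Proof.
  intros Hb [w [x [tau [Ha [Hs [Ht <-]]]]]].
  assert (H := lyap_mono _ _ _ _ _ _ _ Hb Ha Hs 0 tau Ht).
  unfold lyapF in H. rewrite (sol_at0 _ _ _ _ _ _ Hs) in H. unfold Lf. exact H.
Qed.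

Theorem theorem2 (beta a gamma lo hi : R) :
  beta < 0 -> lo < 0 < hi ->
  (gamma <> 0 ->
     control_set beta a gamma lo hi (fun p => Omega lo hi (fst p)) /\
     forall C : R * R -> Prop, control_set beta a gamma lo hi C ->
       forall p, C p <-> Omega lo hi (fst p)) /\
  (gamma = 0 -> a <> 0 ->
     forall t : R, control_set beta a gamma lo hi (fun p => p = (0, t))).
Proof.
  intros Hb Hl. split.
  - intros Hg.
    assert (CP : cs_props beta a gamma lo hi (fun p => Omega lo hi (fst p))).
    { split; [|split].
      - exists (0, 0). unfold Omega; simpl; lra.
      - intros [p t0] Hv. exists (fun _ => p), (csol beta a gamma p p t0).
        split. apply const_adm; auto. split. apply csol_sol; lra.
        intros tau _. unfold csol, Omega in *; simpl in *. lra.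
      - intros [s1 t1] Hv [s2 t2] Hy eps Heps. unfold Omega in *; simpl in *.
        pose (th := Rmin (1 / 2) (eps / (2 * (Rabs s2 + 1)))).
        assert (HA := Rabs_pos s2).
        assert (Hth0 : 0 < th) by (unfold th; apply Rmin_glb_lt; [lra|apply Rdiv_lt_0_compat; lra]).
        assert (Hth1 : th <= 1 / 2) by apply Rmin_l.
        assert (Hth2 : th * (2 * (Rabs s2 + 1)) <= eps).
        { assert (th <= eps / (2 * (Rabs s2 + 1))) by apply Rmin_r.
          apply Rmult_le_compat_r with (r := 2 * (Rabs s2 + 1)) in H; [|lra].
          replace (eps / (2 * (Rabs s2 + 1)) * (2 * (Rabs s2 + 1))) with eps in H by (field; lra). lra. }
        exists ((1 - th) * s2, t2). simpl. split.
        + apply exact_reach; auto.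
          split; destruct (Rle_dec 0 s2); nra.
        + split.
          * replace ((1 - th) * s2 - s2) with (- (th * s2)) by ring. rewrite Rabs_Ropp, Rabs_mult, (Rabs_right th) by lra. nra.
          * replace (t2 - t2) with 0 by ring. rewrite Rabs_R0. lra. }
    assert (MAX : forall D, cs_props beta a gamma lo hi D ->
              (forall v, Omega lo hi (fst v) -> D v) -> forall v, D v -> Omega lo hi (fst v)).
    { intros D [_ [_ HD]] HCD v Dv.
      assert (H00 : Omega lo hi (fst (0, 0))) by (unfold Omega; simpl; lra).
      specialize (HD (0, 0) (HCD _ H00) v Dv).
      assert (Hr : forall z, reach_plus beta a gamma lo hi (0, 0) z -> lo <= fst z <= hi).
      { intros z Hz. destruct (reach_bounds _ _ _ _ _ _ _ Hb Hz) as [B1 B2]. simpl in B1, B2.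
        rewrite Rmin_left in B1 by lra. rewrite Rmax_left in B2 by lra. lra. }
      unfold Omega. split.
      + apply (closure_fst_ge _ _ _ HD). intros z Hz; apply Hr; auto.
      + apply (closure_fst_le _ _ _ HD). intros z Hz; apply Hr; auto. }
    split. split; auto.
    intros C [[[v0 Cv0] [Hi Hii]] HM].
    assert (SUB : forall v, C v -> Omega lo hi (fst v)).
    { intros v Cv. destruct (Hi v Cv) as [w [x [Ha [Hs Hst]]]].
      assert (Cy := Hst 1 ltac:(lra)).
      assert (Hii1 := Hii _ Cy v Cv).
      assert (He1 : exp (beta * 1) < 1) by (replace (beta * 1) with beta by ring; rewrite <- exp_0; apply exp_increasing; lra).
      assert (He0 := exp_pos (beta * 1)).
      assert (U := barrier_hi _ _ _ _ _ _ _ _ Hb Ha Hs 1 ltac:(lra)).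
      assert (L := barrier_lo _ _ _ _ _ _ _ _ Hb Ha Hs 1 ltac:(lra)).
      unfold Omega. split.
      - apply Rnot_lt_le. intros Hlt.
        assert (Hlo : Rmin lo (fst (x 1)) <= fst v).
        { apply (closure_fst_ge _ _ _ Hii1). intros z Hz. apply (reach_bounds _ _ _ _ _ _ _ Hb Hz). }
        unfold Rmin in Hlo. destruct (Rle_dec lo (fst (x 1))); nra.
      - apply Rnot_lt_le. intros Hlt.
        assert (Hhi : fst v <= Rmax hi (fst (x 1))).
        { apply (closure_fst_le _ _ _ Hii1). intros z Hz. apply (reach_bounds _ _ _ _ _ _ _ Hb Hz). }
        unfold Rmax in Hhi. destruct (Rle_dec hi (fst (x 1))); nra. }
    intros p. split. apply SUB.
    apply (HM _ CP SUB).
  - intros Hg Ha t. subst gamma. split.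
    + split; [|split].
      * exists (0, t). auto.
      * intros v ->. exists (fun _ => 0), (csol beta a 0 0 0 t).
        split. apply const_adm; lra. split. apply csol_sol; lra.
        intros tau _. unfold csol. f_equal; field; lra.
      * intros v -> y -> eps Heps. exists (0, t). split. apply reach_refl; auto.
        simpl. replace (0 - 0) with 0 by ring. replace (t - t) with 0 by ring. rewrite Rabs_R0. lra.
    + intros D [_ [HDi HDii]] HCD.
      assert (D0 : D (0, t)) by (apply HCD; auto).
      assert (LD : forall z, D z -> Lf beta a z = a * t).
      { intros z Dz.
        assert (E0 : Lf beta a (0, t) = a * t) by (unfold Lf; simpl; ring).
        apply Rle_antisym.
        - rewrite <- E0. apply (closure_L_ge _ _ _ _ _ (HDii z Dz (0, t) D0)).
          intros z' Hz'. apply (reach_L _ _ _ _ _ _ Hb Hz').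
        - rewrite <- E0. apply (closure_L_ge _ _ _ _ _ (HDii (0, t) D0 z Dz)).
          intros z' Hz'. apply (reach_L _ _ _ _ _ _ Hb Hz'). }
      intros z Dz.
      assert (Hz0 : fst z = 0).
      { destruct (Req_dec (fst z) 0) as [|Hne]; auto. exfalso.
        destruct (HDi z Dz) as [w [x [Hw [Hs Hst]]]].
        destruct (lyap_strict _ _ _ _ _ _ _ Hb Ha Hw Hs Hne) as [tau [Ht Hlt]].
        unfold lyapF in Hlt. rewrite (sol_at0 _ _ _ _ _ _ Hs) in Hlt.
        assert (E1 := LD z Dz). assert (E2 := LD (x tau) (Hst tau ltac:(lra))).
        unfold Lf in E1, E2. lra. }
      assert (E1 := LD z Dz). unfold Lf in E1. rewrite Hz0 in E1.
      assert (snd z = t).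
      { apply (Rmult_eq_reg_l a); auto. lra. }
      destruct z; simpl in *; subst; auto.
Qed.
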